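(* Consider the finite-sum problem $\min_{\theta\in\mathbb{R}^n}\Psi(\theta)=\frac1N\sum_{i=1}^N\psi_i(\theta)$ and the following stochastic method (S2QN). Fix constants $0<r_1<r_2$, a positive sequence $\{\alpha_k\}$, and step sizes $\{\beta_k\}$. At iteration $k$, random index sets $\mathcal S_g^k\subseteq\{1,\dots,N\}$ are chosen, $g_k=\nabla_{\mathcal S_g^k}\Psi(\theta_k):=\frac{1}{|\mathcal S_g^k|}\sum_{i\in\mathcal S_g^k}\nabla\psi_i(\theta_k)$, a symmetric matrix $B_k=H_k+\Lambda_k$ is formed, the regularization parameter is $$\lambda_k=\begin{cases}\frac{2r_1}{\|g_{k-1}\|+r_1}\alpha_k^{-1}, & \|g_{k-1}\|<r_1,\\ \frac{2\|g_{k-1}\|}{\|g_{k-1}\|+r_2}\alpha_k^{-1}, & \|g_{k-1}\|>r_2,\\ \alpha_k^{-1}, &\text{otherwise},\end{cases}$$ and $\theta_{k+1}=\theta_k+\beta_k d_k$ with $d_k=-(B_k+\lambda_kI)^{-1}g_k$. Let $\{\mathcal F_k\}$ be a filtration with $\theta_k$ being $\mathcal F_{k-1}$-measurable. Assume: (i) $\Psi$ is continuously differentiable on $\mathbb{R}^n$, bounded below by $\Psi_{\inf}$, and $\nabla\Psi$ is Lipschitz continuous on $\mathbb{R}^n$ with constant $L_\Psi\ge 1$; (ii) for every $k$, $B_k$ and $\nabla_{\mathcal S_g^k}\Psi(\theta_k)$ are conditionally independent given $\mathcal F_{k-1}$, and almost surely $\mathbb{E}[\nabla_{\mathcal S_g^k}\Psi(\theta_k)\mid\mathcal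 F_{k-1}]=\nabla\Psi(\theta_k)$; (iii) almost surely $\mathbb{E}[\|\nabla_{\mathcal S_g^k}\Psi(\theta_k)-\nabla\Psi(\theta_k)\|^2\mid\mathcal F_{k-1}]\le\sigma_k^2$; (iv) there is $h>0$ with $0\preceq B_k\preceq hI$ for all $k$; (v) (Polyak–Łojasiewicz condition) there is $c\in(0,\infty)$ such that $2c(\Psi(\theta)-\Psi_{\inf})\le\|\nabla\Psi(\theta)\|^2$ for all $\theta\in\mathbb{R}^n$. Suppose $\beta_k\equiv1$, $\alpha_k\equiv\alpha<\min\{\frac{r_1}{4r_2(L_\Psi+h)},\frac8c\}$, and $\sigma_k^2\le M_\sigma\zeta^k$ for some scalar $M_\sigma$ and some $\zeta\in(0,1)$. Then $$\mathbb{E}[\Psi(\theta_k)]-\Psi_{\inf}\le\mu\nu^{k-1}\quad\text{for all }k,$$ where $\nu=\max\{\zeta,1-\frac{1}{16}c\alpha\}$ and $\mu=\max\{\Psi(\theta_1)-\Psi_{\inf},\frac{15M_\sigma}{c}\}$.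
   Context: $\psi_i:\mathbb{R}^n\to\mathbb{R}$ are component functions. The base matrix $H_k$ represents partial Hessian information and $\Lambda_k$ is a quasi-Newton refinement matrix; the theorem only uses the properties (ii) and (iv) of $B_k=H_k+\Lambda_k$. $g_{k-1}$ denotes the stochastic gradient used at the previous iteration. *)

(* Defs.v *)
From HB Require Import structures.
From mathcomp Require Import all_boot all_order all_algebra.
From mathcomp Require Import all_classical all_reals all_analysis.
Set Implicit Arguments. Unset Strict Implicit. Unset Printing Implicit Defensive.
Import Order.TTheory GRing.Theory Num.Theory.
Import numFieldNormedType.Exports.
Local Open Scope classical_set_scope.
Local Open Scope ring_scope.

Section Defs.
Variable R : realType.

Definition enorm (n : nat) (v : 'cV[R]_n) : R := Num.sqrt (\sum_(j < n) v j 0 ^+ 2).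

Definition grad (n : nat) (f : 'cV[R]_n -> R) (theta : 'cV[R]_n) : 'cV[R]_n :=
  \col_(j < n) ('d f theta) (delta_mx j 0).

Definition Psi (n N : nat) (psi : 'I_N -> 'cV[R]_n -> R) (theta : 'cV[R]_n) : R :=
  N%:R^-1 * \sum_(i < N) psi i theta.

Definition sgrad (n N : nat) (psi : 'I_N -> 'cV[R]_n -> R) (S : {set 'I_N})
  (theta : 'cV[R]_n) : 'cV[R]_n :=
  (#|S|%:R)^-1 *: \sum_(i in S) grad (psi i) theta.

Definition reg_lambda (r1 r2 alpha gnorm : R) : R :=
  if gnorm < r1 then (2 * r1 / (gnorm + r1)) * alpha^-1
  else if r2 < gnorm then (2 * gnorm / (gnorm + r2)) * alpha^-1
  else alpha^-1.

Definition psd_le (n : nat) (A B : 'M[R]_n) : Prop :=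
  forall v : 'cV[R]_n, (v^T *m A *m v) 0 0 <= (v^T *m B *m v) 0 0.

End Defs.

Section Prob.
Local Open Scope ereal_scope.
Context {d : measure_display} {Omega : measurableType d} {R : realType}.
Variable P : probability Omega R.

Definition G_measurable (G : set (set Omega)) (Y : Omega -> R) : Prop :=
  forall B : set R, measurable B -> G (Y @^-1` B).

Definition is_filtration (F : nat -> set (set Omega)) : Prop :=
  (forall k, sigma_algebra setT (F k)) /\
  (forall k A, F k A -> measurable A) /\
  (forall k A, F k A -> F k.+1 A).

Definition is_cond_exp (G : set (set Omega)) (X Y : Omega -> R) : Prop :=
  P.-integrable setT (EFin \o X) /\
  G_measurable G Y /\
  P.-integrable setT (EFin \o Y) /\
  (forall A, G A -> \int[P]_(w in A) (X w)%:E = \int[P]_(w in A) (Y w)%:E).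

Definition cond_exp_eq_as (G : set (set Omega)) (X Z : Omega -> R) : Prop :=
  exists Y, is_cond_exp G X Y /\ {ae P, forall w, Y w = Z w}.

Definition cond_exp_le_as (G : set (set Omega)) (X : Omega -> R) (c : R) : Prop :=
  exists Y, is_cond_exp G X Y /\ {ae P, forall w, (Y w <= c)%R}.

Definition sigma_of_mx (m n : nat) (X : Omega -> 'M[R]_(m, n)) : set (set Omega) :=
  smallest (sigma_algebra setT)
    [set E | exists (i : 'I_m) (j : 'I_n) (A : set R),
        measurable A /\ E = (fun w => X w i j) @^-1` A].

Definition cond_indep (G H1 H2 : set (set Omega)) : Prop :=
  forall A C, H1 A -> H2 C ->
    exists YA YC YAC : Omega -> R,
      is_cond_exp G (\1_A) YA /\ is_cond_exp G (\1_C) YC /\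
      is_cond_exp G (\1_(A `&` C)) YAC /\
      {ae P, forall w, YAC w = (YA w * YC w)%R}.

End Prob.

(* Main.v *)
Require Import Defs.
From HB Require Import structures.
From mathcomp Require Import all_boot all_order all_algebra.
From mathcomp Require Import all_classical all_reals all_analysis.
From mathcomp Require Import ring lra.
Import Order.TTheory GRing.Theory Num.Theory.
Import numFieldNormedType.Exports.
Local Open Scope classical_set_scope.
Local Open Scope ring_scope.

Lemma int_mono (R : realType) d (T : measurableType d) (mu : {measure set T -> \bar R})
  (f g : T -> \bar R) : (forall x, (f x <= g x)%E) ->
  (\int[mu]_x f x <= \int[mu]_x g x)%E.
Proof.
move=> fg; rewrite /integral /=.
apply: leeB.
  apply: ereal_sup_le => _ [h hf <-]; exists h => //= x.
  apply: le_trans (hf x) _.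
  apply: (@funepos_le _ _ setT) => //; first by move=> y _; apply: lee_restrict => z _; exact: fg.
  by rewrite in_setT.
apply: ereal_sup_le => _ [h hf <-]; exists h => //= x.
apply: le_trans (hf x) _.
apply: (@funeneg_le _ _ setT) => //; last by rewrite in_setT.
by move=> y _; apply: lee_restrict => z _; exact: fg.
Qed.

Lemma cexp_bound (R : realType) d (T : measurableType d) (P : probability T R)
  (G : set (set T)) (X : T -> R) (c : R) :
  sigma_algebra setT G -> cond_exp_le_as P G X c ->
  P.-integrable setT (EFin \o X) /\ (\int[P]_w (X w)%:E <= c%:E)%E.
Proof.
move=> [G0 GC _] [Y [[iX [mY [iY hint]]] hae]].
split => //.
have GT : G setT by rewrite -(setD0 setT); apply: GC.
rewrite (hint setT GT).
have mY' := measurable_int _ iY.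
rewrite (ae_eq_integral (fun w => Order.min (Y w)%:E c%:E)) //; last first.
- apply: filterS hae => w Hw _ /=.
  by rewrite min_l // lee_fin.
- by apply: measurable_realfun.measurable_mine => //; exact: measurable_cst.
apply: le_trans (@int_mono _ _ _ P _ (fun _ => c%:E) _) _.
  by move=> w; rewrite ge_min lexx orbT.
rewrite integral_cst //; rewrite le_eqVlt; apply/orP; left; apply/eqP. rewrite -[RHS]mule1. by f_equal; exact: probability_setT.
Qed.

Lemma int_cstP (R : realType) d (T : measurableType d) (P : probability T R) (r : R) :
  (\int[P]_x (r%:E) = r%:E)%E.
Proof.
have := integral_cst P measurableT r%:E => /= ->.
by rewrite -[RHS]mule1; f_equal; exact: probability_setT.
Qed.

Set Implicit Arguments. Unset Strict Implicit.

Section Vec.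
Variables (R : realType) (n : nat).
Implicit Types (u v w : 'cV[R]_n).

Definition dot u v : R := \sum_(j < n) u j 0 * v j 0.

Lemma dotC u v : dot u v = dot v u.
Proof. by apply: eq_bigr => j _; rewrite mulrC. Qed.

Lemma dotDl u v w : dot (u + v) w = dot u w + dot v w.
Proof. by rewrite /dot -big_split; apply: eq_bigr => j _; rewrite !mxE mulrDl. Qed.

Lemma dotNl u w : dot (- u) w = - dot u w.
Proof. by rewrite /dot -sumrN; apply: eq_bigr => j _; rewrite !mxE mulNr. Qed.

Lemma dotBl u v w : dot (u - v) w = dot u w - dot v w.
Proof. by rewrite dotDl dotNl. Qed.

Lemma dotZl (a : R) u w : dot (a *: u) w = a * dot u w.
Proof. by rewrite /dot mulr_sumr; apply: eq_bigr => j _; rewrite !mxE mulrA. Qed.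

Lemma dotDr u v w : dot w (u + v) = dot w u + dot w v.
Proof. by rewrite dotC dotDl !(dotC w). Qed.
Lemma dotNr u w : dot w (- u) = - dot w u.
Proof. by rewrite dotC dotNl dotC. Qed.
Lemma dotBr u v w : dot w (u - v) = dot w u - dot w v.
Proof. by rewrite dotDr dotNr. Qed.
Lemma dotZr (a : R) u w : dot w (a *: u) = a * dot w u.
Proof. by rewrite dotC dotZl dotC. Qed.

Lemma dot_ge0 u : 0 <= dot u u.
Proof. by apply: sumr_ge0 => j _; rewrite -expr2 sqr_ge0. Qed.

Lemma dot_eq0 u : dot u u = 0 -> u = 0.
Proof.
move=> /eqP; rewrite psumr_eq0; last by move=> j _; rewrite -expr2 sqr_ge0.
move=> /allP H; apply/matrixP => i j; rewrite ord1 mxE.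
have := H i (mem_index_enum _); rewrite -expr2 sqrf_eq0 => /eqP //.
Qed.

Lemma enorm_sq u : enorm u ^+ 2 = dot u u.
Proof.
rewrite /enorm sqr_sqrtr; first by apply: eq_bigr => j _; rewrite expr2.
by apply: sumr_ge0 => j _; exact: sqr_ge0.
Qed.

Lemma enorm_ge0 u : 0 <= enorm u.
Proof. exact: sqrtr_ge0. Qed.

Lemma young u v (s : R) : 0 < s -> 2 * dot u v <= s^-1 * dot u u + s * dot v v.
Proof.
move=> s0; rewrite /dot !mulr_sumr -big_split /=; apply: ler_sum => j _.
set a := u j 0; set b := v j 0.
have : 0 <= s^-1 * (a - s * b) ^+ 2 by apply: mulr_ge0; [rewrite invr_ge0 ltW | exact: sqr_ge0].
have E : s^-1 * (a - s * b) ^+ 2 = s^-1 * (a * a) + s * (b * b) - 2 * (a * b).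
  by field; rewrite gt_eqF.
move=> H; rewrite E in H; lra.
Qed.


Lemma quad (A : 'M[R]_n) v : (v^T *m A *m v) 0 0 = dot v (A *m v).
Proof. by rewrite -mulmxA mxE; apply: eq_bigr => j _; rewrite mxE. Qed.

Lemma dot_sym (A : 'M[R]_n) u v : A^T = A -> dot u (A *m v) = dot (A *m u) v.
Proof.
move=> AT; rewrite /dot.
under eq_bigr do rewrite mxE mulr_sumr.
under [RHS]eq_bigr do rewrite mxE mulr_suml.
rewrite exchange_big /=; apply: eq_bigr => i _; apply: eq_bigr => j _.
by rewrite -{1}AT mxE; ring.
Qed.

Lemma sq_sub u v : dot (u - v) (u - v) <= 2 * dot u u + 2 * dot v v.
Proof.
have := young u (- v) (@ltr01 R).
rewrite invr1 !mul1r dotNr dotNl dotNr opprK dotBl !dotBr (dotC v u); lra.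
Qed.

Lemma dot_scal (a : R) u v : dot u (a%:M *m v) = a * dot u v.
Proof. by rewrite mul_scalar_mx dotZr. Qed.

End Vec.
Arguments dot {R n}.

Lemma diff_dot (R : realType) n (f : 'cV[R]_n -> R) y v :
  'd f y v = dot (grad f y) v.
Proof.
rewrite {1}(matrix_sum_delta v) linear_sum /dot; apply: eq_bigr => j _.
rewrite big_ord1 linearZ /= /grad mxE mulrC. by [].
Qed.


Lemma descent (R : realType) n (f : 'cV[R]_n -> R) (L : R) x v :
  (forall th, differentiable f th) -> 0 < L ->
  (forall a b, enorm (grad f a - grad f b) <= L * enorm (a - b)) ->
  f (x + v) <= f x + dot (grad f x) v + L * dot v v.
Proof.
move=> df L0 lip.
pose phi := fun t : R => f (t *: v + x).
have dphi t : is_derive t (1:R) phi ('d f (t *: v + x) v).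
  have E : (fun h : R => h^-1 *: ((phi \o shift t) (h *: 1) - phi t)) =
           (fun h : R => h^-1 *: ((f \o shift (t *: v + x)) (h *: v) - f (t *: v + x))).
    apply: funext => h; rewrite /phi /= /shift.
    by rewrite -[h%:A]/(h * 1) mulr1 scalerDl addrA.
  apply: DeriveDef; first by rewrite /derivable E; exact: diff_derivable.
  by rewrite /derive E -deriveE.
have cont : {within `[0, 1], continuous phi}.
  apply: continuous_subspaceT => t; apply: differentiable_continuous.
  apply/derivable1_diffP; exact: (@ex_derive _ _ _ _ _ _ _ (dphi t)).
have [c c01 Hc] := MVT ltr01 (fun t _ => dphi t) cont.
move: c01; rewrite in_itv /= => /andP[c0 c1].
move: Hc; rewrite /phi scale0r add0r scale1r subr0 mulr1 diff_dot (addrC v x).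
set a := grad f (c *: v + x) - grad f x.
have Ha : grad f (c *: v + x) = a + grad f x by rewrite /a subrK.
rewrite Ha dotDl => Hc.
have Hy := young a v L0.
have Haa : dot a a <= L ^+ 2 * (c ^+ 2 * dot v v).
  rewrite -enorm_sq.
  have H1 := lip (c *: v + x) x; rewrite addrK in H1.
  have : enorm a ^+ 2 <= (L * enorm (c *: v)) ^+ 2.
    by rewrite !expr2; apply: ler_pM => //; [exact: enorm_ge0 | exact: enorm_ge0].
  by rewrite exprMn !enorm_sq dotZl dotZr mulrA -expr2.
have Dge := dot_ge0 v.
have c2 : c ^+ 2 * dot v v <= dot v v.
  rewrite -[leRHS]mul1r ler_wpM2r // expr_le1 // ltW //.
have : L^-1 * dot a a <= L * dot v v.
  apply: le_trans (_ : L^-1 * (L ^+ 2 * dot v v) <= _).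
    apply: ler_wpM2l; first by rewrite invr_ge0 ltW.
    apply: le_trans Haa _; apply: ler_wpM2l => //; by rewrite exprn_ge0 // ltW.
  by rewrite expr2 !mulrA mulVf ?mul1r // gt_eqF.
lra.
Qed.

Lemma dot0r (R : realType) n (u : 'cV[R]_n) : dot u 0 = 0.
Proof. by rewrite /dot big1 // => j _; rewrite mxE mulr0. Qed.

Section MatPart.
Variables (R : realType) (n : nat) (Bm : 'M[R]_n) (h lam : R).
Hypotheses (BT : Bm^T = Bm) (B0 : psd_le 0 Bm) (Bh : psd_le Bm h%:M)
  (h0 : 0 < h) (lam0 : 0 < lam).
Let M := Bm + lam%:M.

Lemma MT : M^T = M.
Proof. by rewrite /M raddfD /= tr_scalar_mx BT. Qed.

Lemma Mquad y : dot y (M *m y) = dot y (Bm *m y) + lam * dot y y.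
Proof. by rewrite /M mulmxDl dotDr dot_scal. Qed.

Lemma Bquad_ge0 y : 0 <= dot y (Bm *m y).
Proof. by have := B0 y; rewrite !quad mul0mx dot0r. Qed.

Lemma Bquad_le y : dot y (Bm *m y) <= h * dot y y.
Proof. by have := Bh y; rewrite !quad dot_scal. Qed.

Lemma M_lb y : lam * dot y y <= dot y (M *m y).
Proof. by rewrite Mquad lerDr Bquad_ge0. Qed.

Lemma M_ub y : dot y (M *m y) <= (h + lam) * dot y y.
Proof. by rewrite Mquad mulrDl lerD2r Bquad_le. Qed.

Lemma M_unit : M \in unitmx.
Proof.
rewrite -row_free_unit -kermx_eq0; apply/eqP/row_matrixP => i.
rewrite row0; set r := row i (kermx M).
have r0 : r *m M = 0 by rewrite /r -row_mul mulmx_ker row0.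
have : M *m r^T = 0 by rewrite -{1}MT -trmx_mul r0 trmx0.
move=> Mr; have := M_lb r^T; rewrite Mr dot0r => H.
have Hd : dot r^T r^T = 0.
  apply/eqP; rewrite eq_le dot_ge0 andbT.
  by rewrite -(pmulr_rle0 _ lam0).
by rewrite -[r]trmxK (dot_eq0 Hd) trmx0.
Qed.

Lemma key_ineq u : dot (M *m u) (M *m u) <= (h + lam) * dot u (M *m u).
Proof.
set w := M *m u; set c0 := h + lam.
have c00 : 0 < c0 by rewrite /c0 addr_gt0.
have sym : dot u (M *m w) = dot w w by rewrite dot_sym ?MT.
have H1 : 0 <= dot (c0 *: u - w) (M *m (c0 *: u - w)).
  apply: le_trans (M_lb _); rewrite mulr_ge0 ?dot_ge0 // ltW //.
rewrite mulmxBr -scalemxAr -/w dotBl !dotBr !dotZl !dotZr sym in H1.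
have H2 := M_ub w; rewrite -/c0 in H2.
have : c0 * dot w w <= c0 * (c0 * dot u w) by lra.
by rewrite ler_pM2l.
Qed.

End MatPart.

Lemma one_step (R : realType) n (f : 'cV[R]_n -> R) (L h c al Pinf lam : R)
  (Bm : 'M[R]_n) (x g : 'cV[R]_n) :
  (forall th, differentiable f th) ->
  (forall a b, enorm (grad f a - grad f b) <= L * enorm (a - b)) ->
  0 < L -> 0 < h -> 0 < c -> 0 < al ->
  4 * L * al <= 1 -> 4 * h * al <= 1 ->
  al^-1 <= lam -> lam <= 2 * al^-1 ->
  Bm^T = Bm -> psd_le 0 Bm -> psd_le Bm h%:M ->
  (forall th, Pinf <= f th) ->
  (forall th, 2 * c * (f th - Pinf) <= enorm (grad f th) ^+ 2) ->
  f (x + 1 *: (- (invmx (Bm + lam%:M) *m g))) - Pinf <=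
  Num.max 0 (1 - 2 * c * al / 9) * (f x - Pinf) + 3 * al / 2 * enorm (g - grad f x) ^+ 2.
Proof.
move=> df lip L0 h0 c0 al0 Lal hal lam1 lam2 BT B0 Bh Pinf_le PL.
have lam0 : 0 < lam by apply: lt_le_trans lam1; rewrite invr_gt0.
have Mu : (Bm + lam%:M) *m (invmx (Bm + lam%:M) *m g) = g.
  by rewrite mulKVmx // M_unit.
have hQ := M_lb lam B0 (invmx (Bm + lam%:M) *m g).
have hgg := key_ineq BT B0 Bh h0 lam0 (invmx (Bm + lam%:M) *m g).
rewrite Mu in hQ hgg.
set u := invmx (Bm + lam%:M) *m g in hQ hgg *.
rewrite scale1r.
have D := descent x (- u) df L0 lip.
set xi := g - grad f x.
have gr : grad f x = g - xi by rewrite /xi opprB addrC subrK.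
have X0 : 0 <= f x - Pinf by rewrite subr_ge0.
have PLx := PL x; rewrite enorm_sq gr in PLx.
rewrite gr dotNr dotNl dotNr opprK dotBl (dotC g u) (dotC xi u) in D.
rewrite enorm_sq.
set Q := dot u g in hQ hgg D *.
have al2 : 0 < 2 * al by rewrite mulr_gt0.
have Y := young u xi al2.
have Hs := sq_sub g xi.
have uu0 := dot_ge0 u.
have Z0 := dot_ge0 xi.
have Q0 : 0 <= Q by apply: le_trans hQ; rewrite mulr_ge0 // ltW.
have e1 : dot u u <= al * Q.
  have : al^-1 * dot u u <= Q by apply: le_trans hQ; rewrite ler_wpM2r.
  move=> H; rewrite -[dot u u]mul1r -(mulfV (lt0r_neq0 al0)) -mulrA.
  by rewrite ler_wpM2l // ltW.
have e2 : L * dot u u <= L * (al * Q) by rewrite ler_wpM2l // ltW.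
have e2' : 0 <= (1 - 4 * L * al) * Q by rewrite mulr_ge0 // subr_ge0.
have e3 : (2 * al)^-1 * dot u u <= (2 * al)^-1 * (al * Q).
  by rewrite ler_wpM2l // invr_ge0 mulr_ge0 // ltW.
have e3' : (2 * al)^-1 * (al * Q) = Q / 2 by field; rewrite gt_eqF.
have e4 : al * lam <= 2.
  have := ler_wpM2l (ltW al0) lam2; rewrite mulrCA mulfV ?gt_eqF // mulr1.
  by [].
have e4' : 0 <= (2 - al * lam) * Q by rewrite mulr_ge0 // subr_ge0.
have e4'' : 0 <= (1 - 4 * h * al) * Q by rewrite mulr_ge0 // subr_ge0.
have e5 : al * dot (g - xi) (g - xi) <= al * (2 * dot g g + 2 * dot xi xi).
  by rewrite ler_wpM2l // ltW.
have e5' : al * dot g g <= al * ((h + lam) * Q) by rewrite ler_wpM2l // ltW.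
have e6 : al * (2 * c * (f x - Pinf)) <= al * dot (g - xi) (g - xi).
  by rewrite ler_wpM2l // ltW.
have e7 : (1 - 2 * c * al / 9) * (f x - Pinf) <= Num.max 0 (1 - 2 * c * al / 9) * (f x - Pinf).
  by rewrite ler_wpM2r // le_max lexx orbT.
have e8 : 0 <= al * dot xi xi by rewrite mulr_ge0 // ltW.
lra.
Qed.

Unset Implicit Arguments. Set Strict Implicit.

Lemma lam_bounds (R : realType) (r1 r2 al x : R) : 0 < r1 -> r1 < r2 -> 0 < al -> 0 <= x ->
  al^-1 <= reg_lambda r1 r2 al x /\ reg_lambda r1 r2 al x <= 2 * al^-1.
Proof.
move=> r10 r12 al0 x0.
have ai0 : 0 < al^-1 by rewrite invr_gt0.
suff [t [t1 t2 ->]] : exists t, [/\ 1 <= t, t <= 2 & reg_lambda r1 r2 al x = t * al^-1].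
  split; first by rewrite -[X in X <= _]mul1r ler_wpM2r // ltW.
  by rewrite ler_wpM2r // ltW.
rewrite /reg_lambda; case: ifPn => [xr1|_].
  have p : 0 < x + r1 by rewrite ltr_wpDl.
  exists (2 * r1 / (x + r1)); split => //.
    by rewrite ler_pdivlMr // mul1r; lra.
  by rewrite ler_pdivrMr //; lra.
case: ifPn => [xr2|_]; last by exists 1; split => //; rewrite ?mul1r // ler1n.
have p : 0 < x + r2 by rewrite ltr_wpDl // (lt_trans r10).
exists (2 * x / (x + r2)); split => //.
  by rewrite ler_pdivlMr // mul1r; lra.
by rewrite ler_pdivrMr //; lra.
Qed.

Fixpoint Vseq (T : Type) (R : realType) (a1 qp C : R) (e : nat -> T -> R) (j : nat) : T -> R :=
  match j with
  | 0 => fun _ => a1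
  | j'.+1 => fun w => qp * Vseq T R a1 qp C e j' w + C * e j'.+1 w
  end.

Theorem theorem2
  (R : realType) (d : measure_display) (Omega : measurableType d)
  (P : probability Omega R)
  (n N : nat) (psi : 'I_N -> 'cV[R]_n -> R)
  (r1 r2 : R) (alpha beta : nat -> R) (alpha0 : R)
  (F : nat -> set (set Omega))
  (S : nat -> Omega -> {set 'I_N})
  (B : nat -> Omega -> 'M[R]_n)
  (theta g : nat -> Omega -> 'cV[R]_n) (theta1 : 'cV[R]_n)
  (Psi_inf L h c M_sigma zeta : R) (sigma : nat -> R) :
  (* problem data *)
  (0 < N)%N ->
  (forall i th, differentiable (psi i) th) ->
  (* method parameters *)
  0 < r1 -> r1 < r2 ->
  (forall k, 0 < alpha k) ->
  (* the iteration (k >= 1); g 0 is the (arbitrary) previous gradient used at k = 1 *)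
  (forall k w, (0 < k)%N -> (0 < #|S k w|)%N) ->
  (forall k T, (0 < k)%N -> measurable [set w | S k w = T]) ->
  (forall k i j, (0 < k)%N -> measurable_fun setT (fun w => B k w i j)) ->
  (forall k w, (0 < k)%N -> (B k w)^T = B k w) ->
  (forall w, theta 1%N w = theta1) ->
  (forall k w, (0 < k)%N -> g k w = sgrad psi (S k w) (theta k w)) ->
  (forall k w, (0 < k)%N ->
     theta k.+1 w = theta k w + beta k *:
       (- (invmx (B k w + (reg_lambda r1 r2 (alpha k) (enorm (g k.-1 w)))%:M) *m g k w))) ->
  (* filtration, theta_k is F_{k-1}-measurable *)
  is_filtration F ->
  (forall k j, (0 < k)%N -> G_measurable (F k.-1) (fun w => theta k w j 0)) ->
  (* (i) *)
  (forall th, differentiable (Psi psi) th) ->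
  continuous (grad (Psi psi)) ->
  (forall th, Psi_inf <= Psi psi th) ->
  1 <= L ->
  (forall x y, enorm (grad (Psi psi) x - grad (Psi psi) y) <= L * enorm (x - y)) ->
  (* (ii) *)
  (forall k, (0 < k)%N ->
     cond_indep P (F k.-1) (sigma_of_mx (B k)) (sigma_of_mx (g k))) ->
  (forall k j, (0 < k)%N ->
     cond_exp_eq_as P (F k.-1) (fun w => g k w j 0)
       (fun w => grad (Psi psi) (theta k w) j 0)) ->
  (* (iii) *)
  (forall k, (0 < k)%N ->
     cond_exp_le_as P (F k.-1)
       (fun w => enorm (g k w - grad (Psi psi) (theta k w)) ^+ 2) (sigma k ^+ 2)) ->
  (* (iv) *)
  0 < h ->
  (forall k w, (0 < k)%N -> psd_le 0 (B k w) /\ psd_le (B k w) (h%:M)) ->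
  (* (v) PL condition *)
  0 < c ->
  (forall th, 2 * c * (Psi psi th - Psi_inf) <= enorm (grad (Psi psi) th) ^+ 2) ->
  (* step sizes and variance decay *)
  (forall k, beta k = 1) ->
  (forall k, alpha k = alpha0) ->
  alpha0 < Num.min (r1 / (4 * r2 * (L + h))) (8 / c) ->
  0 < zeta < 1 ->
  (forall k, sigma k ^+ 2 <= M_sigma * zeta ^+ k) ->
  forall k, (0 < k)%N ->
    ((\int[P]_w (Psi psi (theta k w))%:E) - Psi_inf%:E <=
     ((Num.max (Psi psi theta1 - Psi_inf) (15 * M_sigma / c)) *
      (Num.max zeta (1 - c * alpha0 / 16)) ^+ k.-1)%:E)%E.
Proof.
move=> N0 dpsi r10 r12 alpha_pos Spos Smeas Bmeas BT th1 gdef thstep filt thmeas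
  dPsi contgrad Pinf_le L1 lip cind cexp cvar h0 Bpsd c0 PL beta1 alphac alpha_lt
  zeta01 sigmaM k k0.
set f := Psi psi.
move: alpha_lt; rewrite lt_min => /andP[al1 al2].
set al := alpha0.
have al0 : 0 < al by rewrite /al -(alphac 0).
have L0 : 0 < L by apply: lt_le_trans L1.
have r20 : 0 < r2 by apply: lt_trans r12.
have hLal : al * 4 * (L + h) < 1.
  have p : 0 < 4 * r2 * (L + h) by rewrite !mulr_gt0 // addr_gt0.
  have H : al * (4 * r2 * (L + h)) < r1 by rewrite -ltr_pdivlMr.
  have : r2 * (al * 4 * (L + h)) < r2 * 1 by lra.
  by rewrite ltr_pM2l.
have hLa0 : 0 <= h * al by rewrite mulr_ge0 // ltW.
have La0 : 0 <= L * al by rewrite mulr_ge0 // ltW.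
have Lal : 4 * L * al <= 1 by lra.
have hal : 4 * h * al <= 1 by lra.
have cal : c * al < 8.
  by move: al2; rewrite ltr_pdivlMr // mulrC.
have [z0 z1] := andP zeta01.
set nu := Num.max zeta (1 - c * alpha0 / 16).
set a1 := Psi psi theta1 - Psi_inf.
set mu := Num.max a1 (15 * M_sigma / c).
set qp := Num.max 0 (1 - 2 * c * al / 9).
set C := 3 * al / 2.
set e := fun j w => enorm (g j w - grad f (theta j w)) ^+ 2.
have step j w : (0 < j)%N -> f (theta j.+1 w) - Psi_inf <= qp * (f (theta j w) - Psi_inf) + C * e j w.
  move=> j0; rewrite thstep // beta1 alphac.
  have [lb ub] := @lam_bounds R r1 r2 al (enorm (g j.-1 w)) r10 r12 al0 (enorm_ge0 _).
  have [B0 Bh] := Bpsd j w j0.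
  exact: one_step dPsi lip L0 h0 c0 al0 Lal hal lb ub (BT j w j0) B0 Bh Pinf_le PL.
set V := Vseq Omega R a1 qp C e.
have qp0 : 0 <= qp by rewrite le_max lexx.
have VA j w : f (theta j.+1 w) - Psi_inf <= V j w.
  elim: j => [|j IH]; first by rewrite th1.
  apply: le_trans (step _ _ _) _ => //=.
  by rewrite lerD2r ler_wpM2l.
have M0 : 0 <= M_sigma.
  have := sigmaM 0%N; rewrite expr0 mulr1 => H; apply: le_trans H; exact: sqr_ge0.
have nu1 : 1 - c * al / 16 <= nu by rewrite le_max lexx orbT.
have nuz : zeta <= nu by rewrite le_max lexx.
have nu0 : 0 < nu by apply: lt_le_trans nuz.
have mu1 : a1 <= mu by rewrite le_max lexx.
have mu2 : 15 * M_sigma / c <= mu by rewrite le_max lexx orbT.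
have a10 : 0 <= a1 by rewrite subr_ge0.
have Mmu : M_sigma <= c * mu / 15.
  by move: mu2; rewrite ler_pdivrMr // => H; lra.
have hqp : qp <= nu * (1 - c * al / 10).
  have tt : 0 <= (c * al) * (c * al) by rewrite mulr_ge0 // mulr_ge0 // ltW.
  rewrite ge_max; apply/andP; split.
    by rewrite mulr_ge0 // ?ltW //; lra.
  apply: (@le_trans _ _ ((1 - c * al / 16) * (1 - c * al / 10))).
  have : 0 <= c * al by rewrite mulr_ge0 // ltW.
  lra.
  by rewrite ler_wpM2r //; lra.
have C0 : 0 <= C by rewrite /C; lra.
have B_ j : P.-integrable setT (EFin \o V j) /\ (\int[P]_w (V j w)%:E <= (mu * nu ^+ j)%:E)%E.
  elim: j => [|j [iV bV]].
    split; first by have := finite_measure_integrable_cst P a1 measurableT.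
    by rewrite /V /= int_cstP expr0 mulr1 lee_fin.
  have [ie be] := @cexp_bound _ _ _ P _ _ _ (filt.1 j) (cvar j.+1 isT).
  have iZ1 := integrableZl measurableT qp iV.
  have iZ2 := integrableZl measurableT C ie.
  have iS := integrableD measurableT iZ1 iZ2.
  split; first exact: iS.
  rewrite (_ : \int[P]_w (V j.+1 w)%:E = \int[P]_w ((qp%:E * (V j w)%:E) + (C%:E * (e j.+1 w)%:E)))%E //.
  rewrite (integralD measurableT iZ1 iZ2) (integralZl measurableT iV) (integralZl measurableT ie).
  have fV := integrable_fin_num measurableT iV.
  have fe := integrable_fin_num measurableT ie.
  move: bV be fV fe.
  set IV := (\int[P]_w (V j w)%:E)%E.
  set IE := (\int[P]_w _)%E.
  move=> bV be fV fe.
  rewrite -(fineK fV) -(fineK fe) -!EFinM -EFinD lee_fin.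
  move: bV be; rewrite -(fineK fV) -(fineK fe) !lee_fin => bV be.
  set a := fine IV in bV *; set b := fine IE in be *.
  have mu0 : 0 <= mu by apply: le_trans mu1.
  have P0 : 0 <= mu * nu ^+ j by rewrite mulr_ge0 // exprn_ge0 // ltW.
  have zn : zeta ^+ j.+1 <= nu ^+ j.+1 by rewrite lerXn2r // nnegrE ltW.
  have f1 : qp * a <= qp * (mu * nu ^+ j) by rewrite ler_wpM2l.
  have f2 : qp * (mu * nu ^+ j) <= nu * (1 - c * al / 10) * (mu * nu ^+ j).
    by rewrite ler_wpM2r.
  have f3 : C * b <= C * (M_sigma * nu ^+ j.+1).
    rewrite ler_wpM2l //; apply: le_trans be _; apply: le_trans (sigmaM _) _.
    by rewrite ler_wpM2l.
  have f4 : C * (M_sigma * nu ^+ j.+1) <= C * (c * mu / 15 * nu ^+ j.+1).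
    by rewrite ler_wpM2l // ler_wpM2r // exprn_ge0 // ltW.
  rewrite exprSr in f3 f4 *; rewrite /C in f3 f4 *.
  simpl; lra.
move: k0; case: k => // j _ /=.
have [iV bV] := B_ j.
have ic := finite_measure_integrable_cst P Psi_inf measurableT.
have H1 : (\int[P]_w (f (theta j.+1 w))%:E <= \int[P]_w ((V j w)%:E + (cst Psi_inf w)%:E))%E.
  by apply: int_mono => w; rewrite -EFinD lee_fin -lerBlDr (VA j w).
rewrite (integralD measurableT iV ic) /= int_cstP in H1.
rewrite EFinN leeBlDr //; apply: le_trans H1 _.
exact: leeD2r bV.
Qed.
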